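(* Define polynomials $P_0(x)=x$ and $P_{j+1}(x)=-\big[(j+1)xP_j(x)+(1-x^2)P_j'(x)\big]$ for $j\ge0$. Then for every $j\ge0$ and every $x\in\mathbb{R}\setminus\mathbb{Z}$, $$P_j(\cos\pi x)=\pi^{-j}\sin^{j+1}(\pi x)\,\frac{d^j}{dx^j}\cot(\pi x).$$ *)

(* Defs.v *)
From mathcomp Require Import all_boot all_order all_algebra.
From mathcomp Require Import all_classical all_reals all_analysis.
Set Implicit Arguments. Unset Strict Implicit. Unset Printing Implicit Defensive.
Import Order.TTheory GRing.Theory Num.Theory.
Local Open Scope ring_scope.

Fixpoint Ppoly (R : realType) (j : nat) : {poly R} :=
  match j with
  | 0%N => 'X
  | j'.+1 => - ((j'.+1)%:R *: ('X * Ppoly R j') + (1 - 'X ^+ 2) * (Ppoly R j')^`())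
  end.

Definition cotpi (R : realType) (x : R) : R := cos (pi * x) / sin (pi * x).

(* Main.v *)
Require Import Defs.
From mathcomp Require Import all_boot all_order all_algebra.
From mathcomp Require Import all_classical all_reals all_analysis.
From mathcomp Require Import ring lra.
Import Order.TTheory GRing.Theory Num.Theory.
Import numFieldNormedType.Exports.
Local Open Scope ring_scope.


Lemma dlin {R : realType} (y : R) : is_derive y 1 (fun z : R => pi * z) pi.
Proof.
have H := is_deriveZ pi (is_derive_id y (1:R)). change (is_derive y 1 (fun z : R => pi * z) (pi * 1)) in H. by rewrite mulr1 in H.
Qed.

Lemma dsin {R : realType} (y : R) : is_derive y 1 (fun z : R => sin (pi * z)) (cos (pi * y) * pi).
Proof.
exact: (@is_derive1_comp R sin (fun z => pi * z) y _ _ (is_derive_sin _) (dlin y)).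
Qed.

Lemma dcos {R : realType} (y : R) : is_derive y 1 (fun z : R => cos (pi * z)) (- sin (pi * y) * pi).
Proof.
exact: (@is_derive1_comp R cos (fun z => pi * z) y _ _ (is_derive_cos _) (dlin y)).
Qed.

Lemma near_sin {R : realType} (y : R) : sin (pi * y) != 0 -> \forall z \near y, sin (pi * z) != 0.
Proof.
move=> h; apply: (@cvgr_neq0 R R _ (nbhs y) _ (fun z => sin (pi * z)) _ _ h).
apply: differentiable_continuous; apply/derivable1_diffP.
by case: (dsin y).
Qed.

Lemma sinpi_neq0 {R : realType} (x : R) : (forall k : int, x != k%:~R) -> sin (pi * x) != 0.
Proof.
move=> hx; set k := Num.floor x; set t := x - k%:~R.
have t0 : 0 < t.
  rewrite subr_gt0 lt_neqAle floor_le andbT eq_sym; exact: hx.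
have t1 : t < 1.
  by rewrite ltrBlDl; have := floorD1_gt x; rewrite intrD.
have st : 0 < sin (pi * t).
  apply: sin_gt0_pi; rewrite mulr_gt0 ?pi_gt0 //=.
  by rewrite -{2}[pi]mulr1 ltr_pM2l ?pi_gt0.
have ex : pi * x = pi * t + pi * k%:~R by rewrite -mulrDr /t subrK.
apply/eqP => sx0; clearbody t k.
case: k ex {t0 t1} => [n|n] ex.
- have := alternatingn (@sinDpi R) n (pi * t).
  rewrite (_ : pi * t + pi *+ n = pi * x); last by rewrite ex -mulr_natr.
  rewrite sx0 => /esym/eqP; rewrite mulf_eq0 signr_eq0 /= => /eqP sz.
  by move: st; rewrite sz ltxx.
- have := alternatingn (@sinDpi R) n.+1 (pi * x).
  rewrite (_ : pi * x + pi *+ n.+1 = pi * t); last first.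
    by rewrite ex NegzE mulrNz mulrN -mulr_natr -addrA addNr addr0.
  rewrite sx0 mulr0 => sz.
  by move: st; rewrite sz ltxx.
Qed.

Definition hj {R : realType} (j : nat) (y : R) :=
  pi ^+ j * ((Ppoly R j).[cos (pi * y)] * (sin (pi * y) ^+ j.+1)^-1).

Lemma dh {R : realType} j y : sin (pi * y) != 0 -> is_derive y 1 (hj j)
  (pi ^+ j * ((Ppoly R j).[cos (pi * y)] *
     (- (sin (pi * y) ^+ j.+1) ^-2 * ((j.+1%:R * sin (pi * y) ^+ j) * (cos (pi * y) * pi)))
   + (sin (pi * y) ^+ j.+1)^-1 * ((Ppoly R j)^`().[cos (pi * y)] * (- sin (pi * y) * pi)))).
Proof.
move=> hs.
have dP : is_derive y 1 (fun z => (Ppoly R j).[cos (pi * z)])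
   ((Ppoly R j)^`().[cos (pi * y)] * (- sin (pi * y) * pi)).
  exact: (is_derive1_comp (is_derive_poly _ _) (dcos y)).
have dX := is_deriveX j.+1 (dsin y).
rewrite exprfctE in dX.
change (is_derive y 1 (fun z => sin (pi * z) ^+ j.+1)
   ((j.+1%:R * sin (pi * y) ^+ j) * (cos (pi * y) * pi))) in dX.
have dV := @is_deriveV R (fun z => sin (pi * z) ^+ j.+1) y _ 1 (expf_neq0 j.+1 hs) dX.
have dM := is_deriveM dP dV.
have dZ := is_deriveZ (pi ^+ j) dM.
exact: dZ.
Qed.

Lemma key {R : realType} j y : sin (pi * y) != 0 -> derive1n j (@cotpi R) y = hj j y.
Proof.
elim: j y => [|j IH] y hs.
  by rewrite derive1n0 /hj /cotpi /= hornerX expr1 mul1r.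
rewrite derive1nS derive1E.
rewrite (@near_eq_derive R R R _ (hj j)); last first.
  by near=> z; apply: IH; near: z; exact: near_sin.
case: (dh j y hs) => _ ->.
rewrite /hj /= !(hornerN, hornerD, hornerZ, hornerM, hornerX, hornerC, hornerXn).
have e2 := cos2sin2 (pi * y).
set c := cos (pi * y) in e2 *; set s := sin (pi * y) in hs e2 *.
set P := (Ppoly R j).[c]; set D := (Ppoly R j)^`().[c].
rewrite -expr2 e2 !exprS; set S := s ^+ j; set Q := pi ^+ j.
have S0 : S != 0 by rewrite expf_neq0.
rewrite -addn1 natrD.
field.
by rewrite S0 hs.
Unshelve. all: by end_near.
Qed.


Theorem lemma4p2 (R : realType) (j : nat) (x : R) :
  (forall k : int, x != k%:~R) ->
  (Ppoly R j).[cos (pi * x)] =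
    pi ^- j * sin (pi * x) ^+ j.+1 * derive1n j (@cotpi R) x.
Proof.
move=> hx; have hs := sinpi_neq0 _ hx.
rewrite key // /hj.
have p0 : (pi : R) ^+ j != 0 by rewrite expf_neq0 // gt_eqF // pi_gt0.
have s0 : sin (pi * x) ^+ j.+1 != 0 by rewrite expf_neq0.
field.
by rewrite p0 s0.
Qed.
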